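(* In the production planning setting described in the context (general case, intervals may overlap), for every fixed $\pmb{x}\in\mathbb{X}$ the adversarial problem $\max_{\pmb{D}\in\mathcal{U}^d}\sum_{t\in[T]}\max\{f_I(X_t,D_t),f_B(X_t,D_t)\}$ has an optimal solution $\pmb{D}^*\in\mathcal{U}^d$ such that for every $k\in[T]$, $$D^*_k\in\mathcal{D}_k=[\widehat{D}_k-\Delta_k,\widehat{D}_k+\Delta_k]\cap\bigcup_{t\in[T]}\{\widehat{D}_t-\Delta_t,\widehat{D}_t,\widehat{D}_t+\Delta_t\}.$$
   Context: There are $T\ge 1$ periods, $[T]=\{1,\dots,T\}$. Given are a production cost $c^P$, an inventory cost $c^I$, a backordering cost $c^B$ and a selling price $b^P$ (independent of the period), and a set $\mathbb{X}\subseteq\mathbb{R}^T_+$ of feasible production plans $\pmb{x}=(x_1,\dots,x_T)$ described by finitely many linear constraints. For a plan write $X_t=\sum_{i\in[t]}x_i$. For $t\in[T-1]$ let $f_I(X_t,D_t)=c^I(X_t-D_t)$ and $f_B(X_t,D_t)=c^B(D_t-X_t)$; for $t=T$ let $f_I(X_T,D_T)=c^I(X_T-D_T)+c^PX_T-b^PD_T$ and $f_B(X_T,D_T)=c^B(D_T-X_T)+c^PX_T-b^PX_T$. Nominal cumulative demands $\widehat{D}_t\ge 0$ satisfy $\widehat{D}_t\le\widehat{D}_{t+1}$, and deviations satisfy $0\le\Delta_t\le\widehat{D}_t$. The discrete budgeted scenario set is $\mathcal{U}^d=\{\pmb{D}\in\mathbb{R}^T: D_t\le D_{t+1}\ (t\in[T-1]),\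 D_t\in[\widehat{D}_t-\Delta_t,\widehat{D}_t+\Delta_t]\ (t\in[T]),\ |\{t: D_t\ne\widehat{D}_t\}|\le\Gamma^d\}$ with integer $\Gamma^d\in\{0,\dots,T\}$. No non-overlapping assumption on the intervals is made. *)

(* Defs.v *)
From HB Require Import structures.
From mathcomp Require Import all_boot all_order all_algebra.
From mathcomp Require Import reals.
Set Implicit Arguments. Unset Strict Implicit. Unset Printing Implicit Defensive.
Import Order.TTheory GRing.Theory Num.Theory.
Local Open Scope ring_scope.

(* Periods 1..T are represented by 'I_T = {0,...,T-1}; period T is T.-1. *)

Definition feasible_plan (R : realType) (T m : nat)
  (A : 'M[R]_(m, T)) (b : 'cV[R]_m) (x : 'I_T -> R) : Prop :=
  (forall t, 0 <= x t) /\
  (forall i : 'I_m, \sum_(t < T) A i t * x t <= b i 0).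

Definition cumX (R : realType) (T : nat) (x : 'I_T -> R) (t : 'I_T) : R :=
  \sum_(i < T | (i <= t)%N) x i.

Definition fI (R : realType) (T : nat) (cP cI bP : R) (t : 'I_T) (Xt Dt : R) : R :=
  if (t == T.-1 :> nat) then cI * (Xt - Dt) + cP * Xt - bP * Dt
  else cI * (Xt - Dt).

Definition fB (R : realType) (T : nat) (cP cB bP : R) (t : 'I_T) (Xt Dt : R) : R :=
  if (t == T.-1 :> nat) then cB * (Dt - Xt) + cP * Xt - bP * Xt
  else cB * (Dt - Xt).

Definition adv_cost (R : realType) (T : nat) (cP cI cB bP : R)
  (x D : 'I_T -> R) : R :=
  \sum_(t < T) Num.max (fI cP cI bP t (cumX x t) (D t))
                       (fB cP cB bP t (cumX x t) (D t)).

Definition in_Ud (R : realType) (T : nat) (Dhat Delta : 'I_T -> R)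
  (Gamma : nat) (D : 'I_T -> R) : Prop :=
  (forall (t : 'I_T) (Ht : (t.+1 < T)%N), D t <= D (Ordinal Ht)) /\
  (forall t, Dhat t - Delta t <= D t <= Dhat t + Delta t) /\
  (#|[set t : 'I_T | D t != Dhat t]| <= Gamma)%N.

Definition in_calD (R : realType) (T : nat) (Dhat Delta : 'I_T -> R)
  (k : 'I_T) (v : R) : Prop :=
  (Dhat k - Delta k <= v <= Dhat k + Delta k) /\
  (exists t : 'I_T, v = Dhat t - Delta t \/ v = Dhat t \/ v = Dhat t + Delta t).

(* Main.v *)
Require Import Defs.
From HB Require Import structures.
From mathcomp Require Import all_boot all_order all_algebra.
From mathcomp Require Import reals.
From mathcomp Require Import ring lra.
From Stdlib Require Import Classical_Prop FunctionalExtensionality.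
Import Order.TTheory GRing.Theory Num.Theory.
Local Open Scope ring_scope.


Lemma fI_aff (R : realType) (T : nat) (cP cI bP : R) (t : 'I_T) X l u w :
  fI cP cI bP t X ((1 - l) * u + l * w) =
  (1 - l) * fI cP cI bP t X u + l * fI cP cI bP t X w.
Proof. rewrite /fI; case: ifP => _; ring. Qed.

Lemma fB_aff (R : realType) (T : nat) (cP cB bP : R) (t : 'I_T) X l u w :
  fB cP cB bP t X ((1 - l) * u + l * w) =
  (1 - l) * fB cP cB bP t X u + l * fB cP cB bP t X w.
Proof. rewrite /fB; case: ifP => _; ring. Qed.

Lemma cost_convex (R : realType) (T : nat) (cP cI cB bP : R) (x D u w : 'I_T -> R) l :
  0 <= l <= 1 -> (forall t, D t = (1 - l) * u t + l * w t) ->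
  adv_cost cP cI cB bP x D <=
  (1 - l) * adv_cost cP cI cB bP x u + l * adv_cost cP cI cB bP x w.
Proof.
move=> /andP[l0 l1] HD; rewrite /adv_cost !mulr_sumr -big_split /=.
apply: ler_sum => t _; rewrite HD fI_aff fB_aff.
have l0' : 0 <= 1 - l by rewrite subr_ge0.
rewrite ge_max; apply/andP; split; apply: lerD; apply: ler_wpM2l => //;
  rewrite le_max lexx ?orbT //.
Qed.

Lemma finite_max (R : realType) (I : finType) (P : I -> Prop) (F : I -> R) i0 :
  P i0 -> exists i, P i /\ forall j, P j -> F j <= F i.
Proof.
move=> Pi0.
suff: forall s : seq I, exists i, P i /\ forall j, j \in s -> P j -> F j <= F i.
  by case/(_ (enum I)) => i [Pi Hi]; exists i; split => // j; apply: Hi; rewrite mem_enum.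
elim=> [|a s [i [Pi Hi]]]; first by exists i0; split.
case: (Classical_Prop.classic (P a)) => Pa; last first.
  exists i; split => // j; rewrite in_cons => /orP[/eqP -> //|]; exact: Hi.
case: (leP (F a) (F i)) => Ha.
  exists i; split => // j; rewrite in_cons => /orP[/eqP -> //|]; exact: Hi.
exists a; split => // j; rewrite in_cons => /orP[/eqP -> //|js Pj].
by apply: le_trans (Hi _ js Pj) (ltW Ha).
Qed.

Lemma bigmax_seq (R : realType) (s : seq R) (P : pred R) x0 :
  x0 <= \big[Num.max/x0]_(c <- s | P c) c /\
  (forall c, c \in s -> P c -> c <= \big[Num.max/x0]_(c <- s | P c) c) /\
  (\big[Num.max/x0]_(c <- s | P c) c = x0 \/ \big[Num.max/x0]_(c <- s | P c) c \in s) /\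
  (forall z, x0 < z -> (forall c, c \in s -> P c -> c < z) -> \big[Num.max/x0]_(c <- s | P c) c < z).
Proof.
elim: s => [|a s [H1 [H2 [H3 H4]]]]; first by rewrite big_nil; split => //; split => //; split; [left|].
rewrite big_cons; case: ifP => Pa; last first.
  split => //; split; first by move=> c; rewrite in_cons => /orP[/eqP ->|]; [rewrite Pa|exact: H2].
  split; first by case: H3 => [->|h]; [left|right; rewrite in_cons h orbT].
  by move=> z z0 Hz; apply: H4 => // c cs; apply: Hz; rewrite in_cons cs orbT.
split; first by rewrite le_max H1 orbT.
split; first by move=> c; rewrite in_cons => /orP[/eqP ->|cs Pc]; rewrite le_max ?lexx // H2 ?orbT.
split; first by rewrite /Num.max; case: ifP => _; [case: H3 => [->|h]; [left|right; rewrite in_cons h orbT] | right; rewrite in_cons eqxx].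
move=> z z0 Hz; rewrite gt_max Hz ?in_cons ?eqxx //=; apply: H4 => // c cs Pc; apply: Hz => //; by rewrite in_cons cs orbT.
Qed.

Lemma bigmin_seq (R : realType) (s : seq R) (P : pred R) x0 :
  \big[Num.min/x0]_(c <- s | P c) c <= x0 /\
  (forall c, c \in s -> P c -> \big[Num.min/x0]_(c <- s | P c) c <= c) /\
  (\big[Num.min/x0]_(c <- s | P c) c = x0 \/ \big[Num.min/x0]_(c <- s | P c) c \in s) /\
  (forall z, z < x0 -> (forall c, c \in s -> P c -> z < c) -> z < \big[Num.min/x0]_(c <- s | P c) c).
Proof.
elim: s => [|a s [H1 [H2 [H3 H4]]]]; first by rewrite big_nil; split => //; split => //; split; [left|].
rewrite big_cons; case: ifP => Pa; last first.
  split => //; split; first by move=> c; rewrite in_cons => /orP[/eqP ->|]; [rewrite Pa|exact: H2].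
  split; first by case: H3 => [->|h]; [left|right; rewrite in_cons h orbT].
  by move=> z z0 Hz; apply: H4 => // c cs; apply: Hz; rewrite in_cons cs orbT.
split; first by rewrite ge_min H1 orbT.
split; first by move=> c; rewrite in_cons => /orP[/eqP ->|cs Pc]; rewrite ge_min ?lexx // H2 ?orbT.
split; first by rewrite /Num.min; case: ifP => _; [right; rewrite in_cons eqxx | case: H3 => [->|h]; [left|right; rewrite in_cons h orbT]].
move=> z z0 Hz; rewrite lt_min Hz ?in_cons ?eqxx //=; apply: H4 => // c cs Pc; apply: Hz => //; by rewrite in_cons cs orbT.
Qed.


Definition cands (R : realType) (T : nat) (Dhat Delta : 'I_T -> R) : seq R :=
  [seq Dhat t - Delta t | t <- enum 'I_T] ++ [seq Dhat t | t <- enum 'I_T]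
  ++ [seq Dhat t + Delta t | t <- enum 'I_T].
Arguments cands {R T}.

Lemma candsP (R : realType) (T : nat) (Dhat Delta : 'I_T -> R) v :
  v \in cands Dhat Delta <->
  exists t : 'I_T, v = Dhat t - Delta t \/ v = Dhat t \/ v = Dhat t + Delta t.
Proof.
rewrite /cands !mem_cat; split.
  case/or3P => /mapP[t _ ->]; exists t; tauto.
case=> t [->|[->|->]]; apply/or3P; [apply: Or31|apply: Or32|apply: Or33];
  by apply/mapP; exists t => //; rewrite mem_enum.
Qed.

Lemma lift_ok (R : realType) (T : nat) (Dhat Delta : 'I_T -> R) (Gamma : nat)
  (D E a b : 'I_T -> R) :
  let C := cands Dhat Delta in
  in_Ud Dhat Delta Gamma D ->
  (forall t, D t \in C -> E t = D t) ->
  (forall t, D t \notin C -> [/\ a t \in C, Dhat t - Delta t <= a t, a t < D t &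
       forall c, c \in C -> c < D t -> c <= a t]) ->
  (forall t, D t \notin C -> [/\ b t \in C, b t <= Dhat t + Delta t, D t < b t &
       forall c, c \in C -> D t < c -> b t <= c]) ->
  (forall t, D t \notin C -> a t <= E t <= b t) ->
  (forall s t, D s \notin C -> D t \notin C -> a s = a t -> D s <= D t -> E s <= E t) ->
  in_Ud Dhat Delta Gamma E /\ [set t | E t \notin C] \subset [set t | D t \notin C].
Proof.
move=> C [Dmono [Dbd Dsupp]] HE Ha Hb Hab Hsame.
have neq : forall s c, D s \notin C -> c \in C -> D s != c.
  by move=> s c Hs hc; apply/eqP => h; rewrite h hc in Hs.
have mono : forall s t, D s <= D t -> E s <= E t.
  move=> s t Hst.
  case Hs: (D s \in C); case Ht: (D t \in C).
  - by rewrite !HE.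
  - have Ht' : D t \notin C by rewrite Ht.
    have [_ _ _ Hc] := Ha t Ht'.
    have lt : D s < D t by rewrite lt_neqAle Hst andbT eq_sym neq.
    rewrite HE //; apply: le_trans (Hc _ Hs lt) _.
    by case/andP: (Hab t Ht').
  - have Hs' : D s \notin C by rewrite Hs.
    have [_ _ _ Hc] := Hb s Hs'.
    have lt : D s < D t by rewrite lt_neqAle Hst andbT neq.
    rewrite (HE t) //; apply: le_trans (Hc _ Ht lt).
    by case/andP: (Hab s Hs').
  - have Hs' : D s \notin C by rewrite Hs.
    have Ht' : D t \notin C by rewrite Ht.
    have [aC _ aD aM] := Ha s Hs'.
    have [atC _ atD atM] := Ha t Ht'.
    have [bC _ bD bM] := Hb s Hs'.
    have ast : a s <= a t by apply: atM => //; apply: lt_le_trans aD Hst.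
    case: (eqVneq (a s) (a t)) => [eq|ne]; first exact: Hsame.
    have ast' : a s < a t by rewrite lt_neqAle ne.
    case: (ltP (a t) (D s)) => h.
      by have := aM _ atC h; rewrite leNgt ast'.
    have h' : D s < a t by rewrite lt_neqAle h andbT neq.
    case/andP: (Hab s Hs') => _ h1; apply: le_trans h1 _.
    apply: le_trans (bM _ atC h') _.
    by case/andP: (Hab t Ht').
have notnc : forall t, D t \notin C -> D t != Dhat t.
  move=> t Ht; apply: neq => //; apply/candsP; exists t; tauto.
have sub : [set t | E t \notin C] \subset [set t | D t \notin C].
  apply/subsetP => t; rewrite !inE; apply: contra => Ht; by rewrite HE.
split => //; split; first by move=> t Ht; apply: mono; apply: Dmono.
split.
  move=> t; case Ht: (D t \in C); first by rewrite HE.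
  have Ht' : D t \notin C by rewrite Ht.
  have [_ h1 _ _] := Ha t Ht'; have [_ h2 _ _] := Hb t Ht'.
  case/andP: (Hab t Ht') => h3 h4.
  by rewrite (le_trans h1 h3) (le_trans h4 h2).
apply: leq_trans Dsupp; apply: subset_leq_card; apply/subsetP => t; rewrite !inE.
case Ht: (D t \in C); first by rewrite HE.
by move=> _; apply: notnc; rewrite Ht.
Qed.

Lemma reduce (R : realType) (T : nat) (cP cI cB bP : R) (x : 'I_T -> R)
  (Dhat Delta : 'I_T -> R) (Gamma : nat) (D : 'I_T -> R) (t1 : 'I_T) :
  let C := cands Dhat Delta in
  in_Ud Dhat Delta Gamma D -> D t1 \notin C ->
  exists E, [/\ in_Ud Dhat Delta Gamma E,
    (#|[set t | E t \notin C]| < #|[set t | D t \notin C]|)%N &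
    adv_cost cP cI cB bP x D <= adv_cost cP cI cB bP x E].
Proof.
move=> C HD Ht1; have HD' := HD; case: HD' => [_ [Dbd _]].
pose a t := \big[Num.max/(Dhat t - Delta t)]_(c <- C | c < D t) c.
pose b t := \big[Num.min/(Dhat t + Delta t)]_(c <- C | D t < c) c.
have loC t : Dhat t - Delta t \in C by apply/candsP; exists t; tauto.
have hiC t : Dhat t + Delta t \in C by apply/candsP; exists t; tauto.
have neq : forall s c, D s \notin C -> c \in C -> D s != c.
  by move=> s c Hs hc; apply/eqP => h; rewrite h hc in Hs.
have Ha : forall t, D t \notin C -> [/\ a t \in C, Dhat t - Delta t <= a t, a t < D t &
       forall c, c \in C -> c < D t -> c <= a t].
  move=> t Ht.
  have [h1 [h2 [h3 h4]]] := @bigmax_seq R C (fun c => c < D t) (Dhat t - Delta t).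
  have lt : Dhat t - Delta t < D t.
    by case/andP: (Dbd t) => l _; rewrite lt_neqAle l andbT eq_sym neq.
  rewrite /a /b; split => //; first by case: h3 => [->|].
  by apply: h4.
have Hb : forall t, D t \notin C -> [/\ b t \in C, b t <= Dhat t + Delta t, D t < b t &
       forall c, c \in C -> D t < c -> b t <= c].
  move=> t Ht.
  have [h1 [h2 [h3 h4]]] := @bigmin_seq R C (fun c => D t < c) (Dhat t + Delta t).
  have lt : D t < Dhat t + Delta t.
    by case/andP: (Dbd t) => _ l; rewrite lt_neqAle l andbT neq.
  rewrite /a /b; split => //; first by case: h3 => [->|].
  by apply: h4.
pose r t := (D t - a t) / (b t - a t).
have key : forall t, D t \notin C -> r t * (b t - a t) = D t - a t /\ 0 < b t - a t /\ 0 < D t - a t.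
  move=> t Ht; have [_ _ h1 _] := Ha t Ht; have [_ _ h2 _] := Hb t Ht.
  have ba : 0 < b t - a t by rewrite subr_gt0 (lt_trans h1 h2).
  split; last by split => //; rewrite subr_gt0.
  by rewrite /r divfK // gt_eqF.
have [t0 [nc0 Ht0]] := @finite_max R _ (fun t => is_true (D t \notin C)) r t1 Ht1.
have [k0 [ba0 da0]] := key t0 nc0.
set r0 := r t0 in k0 Ht0 *.
have r0pos : 0 < r0 by nra.
have [_ _ db0 _] := Hb t0 nc0.
have dab : D t0 - a t0 < b t0 - a t0 by rewrite ltrD2r.
have r0lt1 : r0 < 1 by nra.
have r0n0 : r0 != 0 by rewrite gt_eqF.
pose L t := if D t \in C then D t else a t.
pose H t := if D t \in C then D t else a t + (D t - a t) / r0.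
have qK : forall t, (D t - a t) / r0 * r0 = D t - a t by move=> t; rewrite divfK.
have HDc : forall t, D t = (1 - r0) * L t + r0 * H t.
  move=> t; rewrite /L /H; case: ifP => _; first ring.
  rewrite mulrDr [r0 * (_ / _)]mulrC qK; ring.
have [HL subL] := @lift_ok R T Dhat Delta Gamma D L a b HD
  (fun t h => ifT _ _ h) Ha Hb
  (fun t h => ltac:(rewrite /L (negbTE h) lexx; have [_ _ h3 _] := Hb t h; by rewrite ltW // (lt_trans _ h3); have [_ _ h4 _] := Ha t h))
  (fun s t hs ht e _ => ltac:(by rewrite /L (negbTE hs) (negbTE ht) e)).
have HHb : forall t, D t \notin C -> a t <= H t <= b t.
  move=> t h; rewrite /H (negbTE h).
  have [kt [bat dat]] := key t h; have rt := Ht0 t h.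
  have q0 : 0 <= (D t - a t) / r0 by rewrite divr_ge0 // ltW.
  have qK' := qK t.
  apply/andP; split; first by lra.
  suff : (D t - a t) / r0 <= b t - a t by lra.
  nra.
have [HH subH] := @lift_ok R T Dhat Delta Gamma D H a b HD
  (fun t h => ifT _ _ h) Ha Hb HHb
  (fun s t hs ht e st => ltac:(rewrite /H (negbTE hs) (negbTE ht) e lerD2l;
     apply: ler_wpM2r; [by rewrite invr_ge0 ltW | by rewrite lerD2r])).
have Hcost := @cost_convex R T cP cI cB bP x D L H r0 (ltac:(by rewrite !ltW)) HDc.
have ltL : (#|[set t | L t \notin C]| < #|[set t | D t \notin C]|)%N.
  apply: proper_card; apply/properP; split => //; exists t1; rewrite !inE //.
  by rewrite /L (negbTE Ht1) negbK; have [] := Ha t1 Ht1.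
have ltH : (#|[set t | H t \notin C]| < #|[set t | D t \notin C]|)%N.
  apply: proper_card; apply/properP; split => //; exists t0; rewrite !inE //.
  rewrite /H (negbTE nc0) negbK.
  have e : (D t0 - a t0) / r0 = b t0 - a t0.
    apply/eqP; rewrite -subr_eq0; apply/eqP.
    have : ((D t0 - a t0) / r0 - (b t0 - a t0)) * r0 = 0 by rewrite mulrBl qK -k0 [r0 * _]mulrC subrr.
    by move/eqP; rewrite mulf_eq0 (negbTE r0n0) orbF => /eqP.
  by rewrite e addrC subrK; have [] := Hb t0 nc0.
have r1 : 0 <= 1 - r0 by rewrite subr_ge0 ltW.
case: (leP (adv_cost cP cI cB bP x L) (adv_cost cP cI cB bP x H)) => hLH.
  exists H; split => //; apply: le_trans Hcost _; nra.
exists L; split => //; apply: le_trans Hcost _; nra.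
Qed.

Theorem lemma3 (R : realType) (T : nat) (cP cI cB bP : R)
  (m : nat) (A : 'M[R]_(m, T)) (b : 'cV[R]_m)
  (Dhat Delta : 'I_T -> R) (Gamma : nat) (x : 'I_T -> R) :
  (0 < T)%N ->
  (forall t, 0 <= Dhat t) ->
  (forall (t : 'I_T) (Ht : (t.+1 < T)%N), Dhat t <= Dhat (Ordinal Ht)) ->
  (forall t, 0 <= Delta t <= Dhat t) ->
  (Gamma <= T)%N ->
  feasible_plan A b x ->
  exists Dstar : 'I_T -> R,
    [/\ in_Ud Dhat Delta Gamma Dstar,
        (forall D, in_Ud Dhat Delta Gamma D ->
           adv_cost cP cI cB bP x D <= adv_cost cP cI cB bP x Dstar) &
        (forall k : 'I_T, in_calD Dhat Delta k (Dstar k))].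
Proof.
move=> _ _ Hmono HDelta _ _.
set C := cands Dhat Delta.
have K : forall n D, (#|[set t | D t \notin C]| <= n)%N -> in_Ud Dhat Delta Gamma D ->
    exists D', [/\ in_Ud Dhat Delta Gamma D', forall t, D' t \in C &
       adv_cost cP cI cB bP x D <= adv_cost cP cI cB bP x D'].
  elim=> [|n IH] D hn HD; case: (pickP (fun t => D t \notin C)) => [t1 h1|hall].
  - have : (0 < #|[set t | D t \notin C]|)%N by apply/card_gt0P; exists t1; rewrite inE.
    by rewrite leqn0 in hn; rewrite (eqP hn).
  - by exists D; split => // t; move: (hall t) => /= /negbFE.
  - have [E [HE ltE cE]] := @reduce R T cP cI cB bP x Dhat Delta Gamma D t1 HD h1.
    have [D' [H1 H2 H3]] := IH E (ltac:(by rewrite -ltnS (leq_trans ltE hn))) HE.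
    by exists D'; split => //; apply: le_trans cE H3.
  - by exists D; split => // t; move: (hall t) => /= /negbFE.
have HDhat : in_Ud Dhat Delta Gamma Dhat.
  split => //; split.
    move=> t; case/andP: (HDelta t) => h0 _.
    apply/andP; split; lra.
  by rewrite (_ : [set t | Dhat t != Dhat t] = set0) ?cards0 //; apply/setP => t; rewrite !inE eqxx.
have [D0 [HD0 CD0 _]] := K _ Dhat (leqnn _) HDhat.
pose N := size C.
pose vec (f : {ffun 'I_T -> 'I_N}) := fun t => nth 0 C (f t).
have toF : forall D, (forall t, D t \in C) -> exists f, vec f = D.
  move=> D HC; exists [ffun t => Ordinal (ltac:(by rewrite index_mem; exact: HC t) : (index (D t) C < N)%N)].
  by apply: functional_extensionality => t; rewrite /vec ffunE /= nth_index.
have [f0 ef0] := toF D0 CD0.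
have [fs [Pfs Hfs]] := @finite_max R _ (fun f => in_Ud Dhat Delta Gamma (vec f))
   (fun f => adv_cost cP cI cB bP x (vec f)) f0 (ltac:(by rewrite /= ef0)).
exists (vec fs); split => //.
  move=> D HD; have [D' [H1 H2 H3]] := K _ D (leqnn _) HD.
  have [f' ef'] := toF D' H2.
  apply: le_trans H3 _; rewrite -ef'; apply: Hfs; by rewrite ef'.
move=> k; split; first by case: Pfs => _ [].
by apply/candsP; rewrite /vec mem_nth.
Qed.
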